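(* Let $\operatorname{Pic}(\operatorname{Spec}\mathbf{Z})$ be the commutative monoid of isomorphism classes of torsion-free rank-1 abelian groups with product induced by $\otimes_{\mathbf{Z}}$ (equivalently, arithmetic divisors $\sum_p n_p[p]$, $n_p\in\mathbf{Z}\cup\{+\infty\}$, $n_p<0$ for finitely many $p$, modulo principal divisors, with addition). Let $\mathcal{P}$ be the set of all subsets $S$ of the set of rational primes, and define $\Theta:\mathcal{P}\to\operatorname{Pic}(\operatorname{Spec}\mathbf{Z})$ by $\Theta(S)=[\mathbf{Z}[1/p\mid p\in S]]$. Then the image of $\Theta$ is exactly the set of idempotent elements of $\operatorname{Pic}(\operatorname{Spec}\mathbf{Z})$. *)

(* Defs.v *)
From mathcomp Require Import all_boot all_algebra.
Set Implicit Arguments. Unset Strict Implicit. Unset Printing Implicit Defensive.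
Import GRing.Theory Num.Theory.
Local Open Scope ring_scope.

(* Z u {+oo}: Some n = n, None = +oo *)
Definition zinf := option int.

Definition zinf_add (a b : zinf) : zinf :=
  match a, b with Some x, Some y => Some (x + y) | _, _ => None end.

Definition zinf_neg (a : zinf) : bool := if a is Some x then x < 0 else false.

(* a divisor assigns n_p to each prime p (values at non-primes are ignored) *)
Definition arith_divisor := nat -> zinf.

Definition is_arith_divisor (D : arith_divisor) : Prop :=
  exists s : seq nat, forall p : nat, prime p -> zinf_neg (D p) -> p \in s.

Definition div_add (D E : arith_divisor) : arith_divisor :=
  fun p => zinf_add (D p) (E p).

Definition pval (p : nat) (q : rat) : int :=
  (logn p (absz (numq q)))%:Z - (logn p (absz (denq q)))%:Z.

Definition div_equiv (D E : arith_divisor) : Prop :=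
  exists q : rat, q != 0 /\
    forall p : nat, prime p -> E p = zinf_add (D p) (Some (pval p q)).

(* Theta(S) = [Z[1/p | p in S]]: its divisor is +oo at p in S, 0 elsewhere *)
Definition Theta (S : pred nat) : arith_divisor :=
  fun p => if S p then None else Some 0.

(* Main.v *)
Require Import Defs.
From mathcomp Require Import all_boot all_algebra.
From mathcomp Require Import zify.
Import GRing.Theory Num.Theory.
Local Open Scope ring_scope.

Lemma pval_frac p (a b : int) : a != 0 -> b != 0 ->
  pval p (a%:~R / b%:~R) = (logn p `|a|%N)%:Z - (logn p `|b|%N)%:Z.
Proof.
move=> a0 b0; set q := _ / _.
have q0 : q != 0 by rewrite /q mulf_neq0 ?invr_eq0 ?intr_eq0.
have d0 : denq q != 0 by rewrite denq_neq0.
have n0 : numq q != 0 by rewrite numq_eq0.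
have E : numq q * b = a * denq q.
  apply: (@intr_inj rat); rewrite !intrM.
  have := divq_num_den q; rewrite /q => /eqP.
  rewrite eqr_div ?intr_eq0 // => /eqP ->; by rewrite mulrC.
have /(congr1 (fun z => logn p `|z|%N)) := E.
rewrite !abszM !lognM ?absz_gt0 // => E2.
rewrite /pval; apply/eqP; rewrite subr_eq addrAC eq_sym subr_eq -!PoszD.
by rewrite E2 addnC.
Qed.

Lemma pvalV p q : pval p q^-1 = - pval p q.
Proof.
have [->|q0] := eqVneq q 0; first by rewrite invr0 /pval (_ : numq 0 = 0) // (_ : denq 0 = 1) // logn0 logn1 subrr oppr0.
have n0 : numq q != 0 by rewrite numq_eq0.
rewrite -{1}(divq_num_den q) invf_div pval_frac ?denq_neq0 //.
by rewrite /pval opprB.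
Qed.

Theorem theorem2p16 (D : arith_divisor) (HD : is_arith_divisor D) :
  (exists S : pred nat, div_equiv (Theta S) D) <-> div_equiv (div_add D D) D.
Proof.
split.
- case=> S [q [q0 Hq]]; exists q^-1; split; first by rewrite invr_eq0.
  move=> p pp; rewrite /div_add !Hq // /Theta pvalV.
  by case: (S p) => //=; congr Some; rewrite !add0r addrK.
- case=> q [q0 Hq]; exists [pred p | D p == None]; exists q^-1.
  split; first by rewrite invr_eq0.
  move=> p pp; rewrite /Theta /= pvalV.
  have := Hq p pp; rewrite /div_add.
  case: (D p) => [x|] //= [] Ex.
  by congr Some; rewrite add0r; move: Ex; set v := pval p q; lia.
Qed.
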